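(* Let a 3D consistent six-tuple of quad-equations with the tetrahedron property, composed of equations $H_k^\epsilon$ (rhombic and/or trapezoidal) and/or $Q_k^\epsilon$ for a fixed $k\in\{1,2,3\}$, be given on an elementary cube of $\mathbb Z^3$ (any of the nine systems described in the context, including those obtained by color inversion and rotation), with the Lagrangians $L,\Lambda,\bar\Lambda$ chosen consistently as in the context. Then, for every solution $X,X_i,X_{ij},X_{123}$ of the six-tuple, $$\Delta_1\mathcal L(X,X_2,X_3;\alpha_2,\alpha_3)+\Delta_2\mathcal L(X,X_3,X_1;\alpha_3,\alpha_1)+\Delta_3\mathcal L(X,X_1,X_2;\alpha_1,\alpha_2)=0,$$ where $\Delta_i$ acts on vertex functions by $\Delta_i F(X)=F(X_i)-F(X)$ (i.e., it shifts all arguments $X_\bullet\mapsto X_{\bullet i}$, with $X_{ii}$ not occurring), and $\mathcal L$ is the discrete Lagrangian two-form defined in the context. Consequently the action $S=\sum_{\sigma\in\Sigma}\mathcal L(\sigma)$ on quad-surfaces $\Sigma\subset\mathbb Z^m$ is invariant under elementary 3D flips on solutions.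
   Context: Fix constants $\epsilon,\delta\in\mathbb C$ and $k\in\{1,2,3\}$. Polynomials: $Q_1^\epsilon=\alpha_1(x_1x_2+x_3x_4)-\alpha_2(x_1x_4+x_2x_3)-(\alpha_1-\alpha_2)(x_1x_3+x_2x_4)+\epsilon^2\alpha_1\alpha_2(\alpha_1-\alpha_2)$; $Q_2^\epsilon=\alpha_1(x_1x_2+x_3x_4)-\alpha_2(x_1x_4+x_2x_3)-(\alpha_1-\alpha_2)(x_1x_3+x_2x_4)+\alpha_1\alpha_2(\alpha_1-\alpha_2)+\epsilon\alpha_1\alpha_2(\alpha_1-\alpha_2)(x_1+x_2+x_3+x_4)-\epsilon^2\alpha_1\alpha_2(\alpha_1-\alpha_2)(\alpha_1^2-\alpha_1\alpha_2+\alpha_2^2)$; $Q_3^\epsilon=\sinh(2\alpha_1)(x_1x_2+x_3x_4)-\sinh(2\alpha_2)(x_1x_4+x_2x_3)-\sinh(2(\alpha_1-\alpha_2))(x_1x_3+x_2x_4)-4\delta^2\epsilon^2\sinh(2\alpha_1)\sinh(2\alpha_2)\sinh(2(\alpha_1-\alpha_2))$; $H_1^\epsilon=(x_1-x_3)(x_2-x_4)+(\alpha_2-\alpha_1)(1-\epsilon^2x_2x_4)$; $H_2^\epsilon=(x_1-x_3)(x_2-x_4)+(\alpha_2-\alpha_1)(x_1+x_2+x_3+x_4)+\alpha_2^2-\alpha_1^2-\frac{\epsilon}{2}(\alpha_2-\alpha_1)(2x_2+\alpha_1+\alpha_2)(2x_4+\alpha_1+\alpha_2)-\frac{\epsilon}{2}(\alpha_2-\alpha_1)^3$;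 $H_3^\epsilon=e^{2\alpha_1}(x_1x_2+x_3x_4)-e^{2\alpha_2}(x_1x_4+x_2x_3)+(e^{4\alpha_1}-e^{4\alpha_2})\big(\delta^2+\epsilon^2x_2x_4e^{-2(\alpha_1+\alpha_2)}\big)$. Rhombic $H_k^\epsilon$: $H_k^\epsilon(x_1,x_2,x_3,x_4)=0$ on a square with cyclic vertices $x_1,x_2,x_3,x_4$, edges $x_1x_2,x_3x_4$ with $\alpha_1$, $x_2x_3,x_4x_1$ with $\alpha_2$; $x_1,x_3$ black, $x_2,x_4$ white. Trapezoidal $H_k^\epsilon$: $H_k^\epsilon(x_1,x_3,x_2,x_4;\alpha_2-\alpha_1,\alpha_2)=0$ on a square with cyclic vertices $x_1,x_2,x_3,x_4$, black edge $x_1x_2$ and white edge $x_3x_4$ with $\alpha_1$, edges $x_2x_3,x_4x_1$ with $\alpha_2$. For $Q_k^\epsilon$ all vertices are black (or all white). Six-tuples: on the cube with vertices $x,x_i,x_{ij},x_{123}$ ($i,j\in\{1,2,3\}$), edges in direction $i$ carry $\alpha_i$; quad-equations $A(x,x_1,x_2,x_{12})=0$, $\bar A(x_3,x_{13},x_{23},x_{123})=0$, $B(x,x_2,x_3,x_{23})=0$, $\bar B(x_1,x_{12},x_{13},x_{123})=0$, $C(x,x_1,x_3,x_{13})=0$, $\bar C(x_2,x_{12},x_{23},x_{123})=0$ on the faces; 3D consistency means that for arbitrary $x,x_1,x_2,x_3$ the three values of $x_{123}$ from $\bar A,\bar B,\bar C$ coincide; the tetrahedron property means that solutions also satisfy quad-equations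 $K(x,x_{12},x_{13},x_{23})=0$ and $\bar K(x_1,x_2,x_3,x_{123})=0$ (diagonals $x_ix_j$ resp. $x_{ik}x_{jk}$ carry $\alpha_i-\alpha_j$). The nine systems (up to Möbius transformations of fields, color inversion, and rotations) are, for $k=1,2,3$: (a) all six faces rhombic $H_k^\epsilon$, tetrahedron equations $Q_k^\epsilon$ (e.g. $x,x_{ij}$ black, $x_i,x_{123}$ white); (b) two pairs of opposite faces trapezoidal $H_k^\epsilon$, one pair $Q_k^\epsilon$, tetrahedron equations $H_k^\epsilon$ (e.g. $x,x_1,x_2,x_{12}$ black, $x_3,x_{13},x_{23},x_{123}$ white); (c) two pairs of opposite faces trapezoidal $H_k^\epsilon$, one pair rhombic $H_k^\epsilon$, tetrahedron equations $H_k^\epsilon$ (e.g. $x,x_{12},x_3,x_{123}$ black, $x_1,x_2,x_{13},x_{23}$ white). The polynomials are normalized so that on each edge of the cube the biquadratics (biquadratic $Q^{i,j}=Q_{x_k}Q_{x_\ell}-QQ_{x_kx_\ell}$, $\{k,\ell\}$ complementary to $\{i,j\}$) coming from the two adjacent faces coincide up to the factor $-1$; consequently each edge and each face diagonal carries a well-defined Lagrangian. Lagrangians: in uniformizing variables $x=f(X)$ (black: $x=X$ for $k=1$; $x=X(1+\epsilon X)$, or $X$ if $\epsilon=0$, for $k=2$; $x=2\delta\epsilon\cosh 2X$, or $e^{2X}$ if $\epsilon=0$, for $k=3$; white: $x=X$ for $k=1,2$, $x=e^{2X}$ for $k=3$), functions $L(X,Y;\alpha)$ ($X$ black, $Y$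 white), symmetric $\Lambda(X,X';a)$ (black-black), symmetric $\bar\Lambda(Y,Y';a)$ (white-white), chosen so that for each single quad-equation on its solutions: rhombic: $L(X_1,X_2;\alpha_1)+L(X_3,X_4;\alpha_1)-L(X_1,X_4;\alpha_2)-L(X_3,X_2;\alpha_2)-\Lambda(X_1,X_3;\alpha_1-\alpha_2)-\bar\Lambda(X_2,X_4;\alpha_1-\alpha_2)=0$; trapezoidal: $\Lambda(X_1,X_2;\alpha_1)+\bar\Lambda(X_3,X_4;\alpha_1)-L(X_1,X_4;\alpha_2)-L(X_2,X_3;\alpha_2)+L(X_1,X_3;\alpha_2-\alpha_1)+L(X_2,X_4;\alpha_2-\alpha_1)=0$; $Q_k^\epsilon$: the rhombic relation with all Lagrangians equal to $\Lambda$ (resp. $\bar\Lambda$ on all-white squares). Two-form on an oriented square with $X$ (at $n$), $X_1$ (at $n+e_i$), $X_2$ (at $n+e_j$), parameters $\alpha_1$ (direction $i$), $\alpha_2$ (direction $j$), according to the colors: (a) $X$ black, $X_1,X_2$ white: $\mathcal L=L(X,X_1;\alpha_1)-L(X,X_2;\alpha_2)-\bar\Lambda(X_1,X_2;\alpha_1-\alpha_2)$; (b) $X$ white, $X_1,X_2$ black: $\mathcal L=L(X_1,X;\alpha_1)-L(X_2,X;\alpha_2)-\Lambda(X_1,X_2;\alpha_1-\alpha_2)$; (c) $X,X_2$ black, $X_1$ white: $\mathcal L=L(X,X_1;\alpha_1)-\Lambda(X,X_2;\alpha_2)-L(X_2,X_1;\alpha_1-\alpha_2)$; (d) $X,X_2$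 white, $X_1$ black: $\mathcal L=L(X_1,X;\alpha_1)-\bar\Lambda(X,X_2;\alpha_2)-L(X_1,X_2;\alpha_1-\alpha_2)$; (e) $X,X_1$ black, $X_2$ white: $\mathcal L=\Lambda(X,X_1;\alpha_1)-L(X,X_2;\alpha_2)+L(X_1,X_2;\alpha_2-\alpha_1)$; (f) $X,X_1$ white, $X_2$ black: $\mathcal L=\bar\Lambda(X,X_1;\alpha_1)-L(X_2,X;\alpha_2)+L(X_2,X_1;\alpha_2-\alpha_1)$; (g) all black: $\mathcal L=\Lambda(X,X_1;\alpha_1)-\Lambda(X,X_2;\alpha_2)-\Lambda(X_1,X_2;\alpha_1-\alpha_2)$; (h) all white: $\mathcal L=\bar\Lambda(X,X_1;\alpha_1)-\bar\Lambda(X,X_2;\alpha_2)-\bar\Lambda(X_1,X_2;\alpha_1-\alpha_2)$. *)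

(* Defs.v *)
From Stdlib Require Import Reals.
Open Scope R_scope.

Record CC : Type := mkC { Re : R; Im : R }.

Definition Cr (r : R) : CC := mkC r 0.
Definition C0 : CC := Cr 0.
Definition C1 : CC := Cr 1.
Definition Cadd (z w : CC) : CC := mkC (Re z + Re w) (Im z + Im w).
Definition Copp (z : CC) : CC := mkC (- Re z) (- Im z).
Definition Csub (z w : CC) : CC := Cadd z (Copp w).
Definition Cmul (z w : CC) : CC :=
  mkC (Re z * Re w - Im z * Im w) (Re z * Im w + Im z * Re w).
Definition Cexp (z : CC) : CC := mkC (exp (Re z) * cos (Im z)) (exp (Re z) * sin (Im z)).
Definition Ccosh (z : CC) : CC := Cmul (Cr (/2)) (Cadd (Cexp z) (Cexp (Copp z))).
Definition Csinh (z : CC) : CC := Cmul (Cr (/2)) (Csub (Cexp z) (Cexp (Copp z))).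

Definition C_eq_dec (z w : CC) : {z = w} + {z <> w}.
Proof.
  destruct z as [a b], w as [c d].
  destruct (Req_EM_T a c) as [H1|H1]; [destruct (Req_EM_T b d) as [H2|H2]|].
  - left; subst; reflexivity.
  - right; intro H; inversion H; contradiction.
  - right; intro H; inversion H; contradiction.
Defined.

Declare Scope C_scope.
Delimit Scope C_scope with Cx.
Bind Scope C_scope with CC.
Notation "x + y" := (Cadd x y) : C_scope.
Notation "x - y" := (Csub x y) : C_scope.
Notation "- x" := (Copp x) : C_scope.
Notation "x * y" := (Cmul x y) : C_scope.
Notation "0" := C0 : C_scope.
Notation "1" := C1 : C_scope.
Notation "2" := (Cr 2) : C_scope.
Notation "4" := (Cr 4) : C_scope.
Notation "x ^2" := (Cmul x x) (at level 2) : C_scope.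

Local Open Scope C_scope.

Inductive kind : Type := K1 | K2 | K3.

Definition Qpoly (k : kind) (e d : CC) (x1 x2 x3 x4 a1 a2 : CC) : CC :=
  match k with
  | K1 => a1 * (x1 * x2 + x3 * x4) - a2 * (x1 * x4 + x2 * x3)
          - (a1 - a2) * (x1 * x3 + x2 * x4) + e^2 * a1 * a2 * (a1 - a2)
  | K2 => a1 * (x1 * x2 + x3 * x4) - a2 * (x1 * x4 + x2 * x3)
          - (a1 - a2) * (x1 * x3 + x2 * x4) + a1 * a2 * (a1 - a2)
          + e * a1 * a2 * (a1 - a2) * (x1 + x2 + x3 + x4)
          - e^2 * a1 * a2 * (a1 - a2) * (a1^2 - a1 * a2 + a2^2)
  | K3 => Csinh (2 * a1) * (x1 * x2 + x3 * x4) - Csinh (2 * a2) * (x1 * x4 + x2 * x3)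
          - Csinh (2 * (a1 - a2)) * (x1 * x3 + x2 * x4)
          - 4 * d^2 * e^2 * Csinh (2 * a1) * Csinh (2 * a2) * Csinh (2 * (a1 - a2))
  end.

(** [Hpoly k e d x1 x2 x3 x4 a1 a2] is H_k^e (x1, x3 black; x2, x4 white). *)
Definition Hpoly (k : kind) (e d : CC) (x1 x2 x3 x4 a1 a2 : CC) : CC :=
  match k with
  | K1 => (x1 - x3) * (x2 - x4) + (a2 - a1) * (1 - e^2 * x2 * x4)
  | K2 => (x1 - x3) * (x2 - x4) + (a2 - a1) * (x1 + x2 + x3 + x4) + a2^2 - a1^2
          - e * Cr (/2) * (a2 - a1) * (2 * x2 + a1 + a2) * (2 * x4 + a1 + a2)
          - e * Cr (/2) * ((a2 - a1) * (a2 - a1) * (a2 - a1))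
  | K3 => Cexp (2 * a1) * (x1 * x2 + x3 * x4) - Cexp (2 * a2) * (x1 * x4 + x2 * x3)
          + (Cexp (4 * a1) - Cexp (4 * a2))
            * (d^2 + e^2 * x2 * x4 * Cexp (- (2 * (a1 + a2))))
  end.

Definition unif_black (k : kind) (e d : CC) (X : CC) : CC :=
  match k with
  | K1 => X
  | K2 => X * (1 + e * X)
  | K3 => if C_eq_dec e 0 then Cexp (2 * X) else 2 * d * e * Ccosh (2 * X)
  end.

Definition unif_white (k : kind) (X : CC) : CC :=
  match k with
  | K1 | K2 => X
  | K3 => Cexp (2 * X)
  end.

(** colour [true] = black, [false] = white *)
Definition unif (k : kind) (e d : CC) (black : bool) (X : CC) : CC :=
  if black then unif_black k e d X else unif_white k X.

(** The square has cyclic vertices p0 p1 p2 p3 (values x0 .. x3, colours c0 .. c3);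
    the edges p0p1, p2p3 carry b1 and the edges p1p2, p3p0 carry b2.
    - all black: Q_k^eps; all white: Q_k^0;
    - opposite vertices of equal colour: rhombic H_k^eps, i.e.
      H(x1,x2,x3,x4;al1,al2) with x1 black, edge x1x2 carrying al1;
    - one black edge and one white edge: trapezoidal H_k^eps, i.e.
      H(x1,x3,x2,x4; al2-al1, al2) where x1x2 is the black edge carrying al1,
      x2x3 carries al2 and x3x4 is the white edge.
    Squares with three vertices of one colour never occur for the admissible
    colourings below; the (irrelevant) value 0 is used for them. *)
Definition quadPoly (k : kind) (e d : CC) (c0 c1 c2 c3 : bool)
    (x0 x1 x2 x3 b1 b2 : CC) : CC :=
  match c0, c1, c2, c3 with
  | true, true, true, true => Qpoly k e d x0 x1 x2 x3 b1 b2
  | false, false, false, false => Qpoly k 0 d x0 x1 x2 x3 b1 b2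
  | true, false, true, false => Hpoly k e d x0 x1 x2 x3 b1 b2
  | false, true, false, true => Hpoly k e d x1 x2 x3 x0 b2 b1
  (* trapezoidal, black edge p0p1 *)
  | true, true, false, false => Hpoly k e d x0 x2 x1 x3 (b2 - b1) b2
  (* trapezoidal, black edge p2p3 (as square p3 p2 p1 p0) *)
  | false, false, true, true => Hpoly k e d x3 x1 x2 x0 (b2 - b1) b2
  (* trapezoidal, black edge p1p2 (as square p1 p2 p3 p0) *)
  | false, true, true, false => Hpoly k e d x1 x3 x2 x0 (b1 - b2) b1
  (* trapezoidal, black edge p3p0 (as square p0 p3 p2 p1) *)
  | true, false, false, true => Hpoly k e d x0 x2 x3 x1 (b1 - b2) b1
  | _, _, _, _ => 0
  end.

Definition vertex : Type := (bool * bool * bool)%type.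
Definition v000 : vertex := (false, false, false).
Definition v100 : vertex := (true, false, false).
Definition v010 : vertex := (false, true, false).
Definition v001 : vertex := (false, false, true).
Definition v110 : vertex := (true, true, false).
Definition v101 : vertex := (true, false, true).
Definition v011 : vertex := (false, true, true).
Definition v111 : vertex := (true, true, true).

(** For a <> 0 these 14
    colourings are exactly the colourings of the nine systems (a), (b), (c)
    together with their colour inversions and rotations:
    a = (1,1,1): system (a); a = e_i: system (b); a = e_i + e_j: system (c). *)
Definition colour (a : vertex) (b : bool) (n : vertex) : bool :=
  let '(a1, a2, a3) := a in
  let '(n1, n2, n3) := n in
  xorb b (xorb (andb a1 n1) (xorb (andb a2 n2) (andb a3 n3))).

Definition sq_eq (k : kind) (e d : CC) (col : vertex -> bool) (X : vertex -> CC)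
    (p0 p1 p2 p3 : vertex) (b1 b2 : CC) : Prop :=
  quadPoly k e d (col p0) (col p1) (col p2) (col p3)
    (unif k e d (col p0) (X p0)) (unif k e d (col p1) (X p1))
    (unif k e d (col p2) (X p2)) (unif k e d (col p3) (X p3)) b1 b2 = 0.

Definition six_tuple (k : kind) (e d : CC) (col : vertex -> bool) (X : vertex -> CC)
    (al1 al2 al3 : CC) : Prop :=
  sq_eq k e d col X v000 v100 v110 v010 al1 al2 /\
  sq_eq k e d col X v001 v101 v111 v011 al1 al2 /\
  sq_eq k e d col X v000 v010 v011 v001 al2 al3 /\
  sq_eq k e d col X v100 v110 v111 v101 al2 al3 /\
  sq_eq k e d col X v000 v100 v101 v001 al1 al3 /\
  sq_eq k e d col X v010 v110 v111 v011 al1 al3.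

(** The tetrahedron equations K(x,x12,x13,x23) = 0 and Kbar(x1,x2,x3,x123) = 0,
    written as squares (x, x12, x23, x13) and (x1, x2, x123, x3) whose
    diagonals carry the differences of the al_i; the overall sign s of the
    parameters fixes the orientation required by the (non-odd) H-equations. *)
Definition tetrahedron_eqs (k : kind) (e d : CC) (col : vertex -> bool)
    (X : vertex -> CC) (al1 al2 al3 : CC) : Prop :=
  let s := if Bool.eqb (col v100) (col v000) then Copp 1 else 1 in
  sq_eq k e d col X v000 v110 v011 v101 (s * (al1 - al2)) (s * (al1 - al3)) /\
  sq_eq k e d col X v100 v010 v111 v001 (s * (al1 - al2)) (s * (al1 - al3)).

Definition Lagrangian_relations (k : kind) (e d : CC)
    (L Lam Lamb : CC -> CC -> CC -> CC) : Prop :=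
  (forall X X' a, Lam X X' a = Lam X' X a) /\
  (forall Y Y' a, Lamb Y Y' a = Lamb Y' Y a) /\
  (forall a1 a2 X1 X2 X3 X4,
     Hpoly k e d (unif_black k e d X1) (unif_white k X2)
                 (unif_black k e d X3) (unif_white k X4) a1 a2 = 0 ->
     L X1 X2 a1 + L X3 X4 a1 - L X1 X4 a2 - L X3 X2 a2
       - Lam X1 X3 (a1 - a2) - Lamb X2 X4 (a1 - a2) = 0) /\
  (forall a1 a2 X1 X2 X3 X4,
     Hpoly k e d (unif_black k e d X1) (unif_white k X3)
                 (unif_black k e d X2) (unif_white k X4) (a2 - a1) a2 = 0 ->
     Lam X1 X2 a1 + Lamb X3 X4 a1 - L X1 X4 a2 - L X2 X3 a2
       + L X1 X3 (a2 - a1) + L X2 X4 (a2 - a1) = 0) /\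
  (forall a1 a2 X1 X2 X3 X4,
     Qpoly k e d (unif_black k e d X1) (unif_black k e d X2)
                 (unif_black k e d X3) (unif_black k e d X4) a1 a2 = 0 ->
     Lam X1 X2 a1 + Lam X3 X4 a1 - Lam X1 X4 a2 - Lam X3 X2 a2
       - Lam X1 X3 (a1 - a2) - Lam X2 X4 (a1 - a2) = 0) /\
  (forall a1 a2 Y1 Y2 Y3 Y4,
     Qpoly k 0 d (unif_white k Y1) (unif_white k Y2)
                 (unif_white k Y3) (unif_white k Y4) a1 a2 = 0 ->
     Lamb Y1 Y2 a1 + Lamb Y3 Y4 a1 - Lamb Y1 Y4 a2 - Lamb Y3 Y2 a2
       - Lamb Y1 Y3 (a1 - a2) - Lamb Y2 Y4 (a1 - a2) = 0).

(** * The discrete Lagrangian two-form on an oriented square with X (at n),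
    X1 (at n+e_i), X2 (at n+e_j), colours cX, cX1, cX2 (true = black). *)
Definition two_form (L Lam Lamb : CC -> CC -> CC -> CC) (cX cX1 cX2 : bool)
    (X X1 X2 a1 a2 : CC) : CC :=
  match cX, cX1, cX2 with
  | true, false, false => L X X1 a1 - L X X2 a2 - Lamb X1 X2 (a1 - a2)
  | false, true, true => L X1 X a1 - L X2 X a2 - Lam X1 X2 (a1 - a2)
  | true, false, true => L X X1 a1 - Lam X X2 a2 - L X2 X1 (a1 - a2)
  | false, true, false => L X1 X a1 - Lamb X X2 a2 - L X1 X2 (a1 - a2)
  | true, true, false => Lam X X1 a1 - L X X2 a2 + L X1 X2 (a2 - a1)
  | false, false, true => Lamb X X1 a1 - L X2 X a2 + L X2 X1 (a2 - a1)
  | true, true, true => Lam X X1 a1 - Lam X X2 a2 - Lam X1 X2 (a1 - a2)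
  | false, false, false => Lamb X X1 a1 - Lamb X X2 a2 - Lamb X1 X2 (a1 - a2)
  end.

Definition calL (L Lam Lamb : CC -> CC -> CC -> CC) (col : vertex -> bool)
    (X : vertex -> CC) (p q r : vertex) (a1 a2 : CC) : CC :=
  two_form L Lam Lamb (col p) (col q) (col r) (X p) (X q) (X r) a1 a2.

Definition closure_sum (L Lam Lamb : CC -> CC -> CC -> CC) (col : vertex -> bool)
    (X : vertex -> CC) (al1 al2 al3 : CC) : CC :=
  (calL L Lam Lamb col X v100 v110 v101 al2 al3 - calL L Lam Lamb col X v000 v010 v001 al2 al3)
  + (calL L Lam Lamb col X v010 v011 v110 al3 al1 - calL L Lam Lamb col X v000 v001 v100 al3 al1)
  + (calL L Lam Lamb col X v001 v101 v011 al1 al2 - calL L Lam Lamb col X v000 v100 v010 al1 al2).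

(* Main.v *)
Require Import Defs.
From Stdlib Require Import Reals Lra.
Local Open Scope C_scope.

Lemma Ceq (z w : CC) : Re z = Re w -> Im z = Im w -> z = w.
Proof. destruct z, w; simpl; intros; subst; reflexivity. Qed.

Lemma Re_add z w : Re (Cadd z w) = (Re z + Re w)%R. Proof. reflexivity. Qed.
Lemma Im_add z w : Im (Cadd z w) = (Im z + Im w)%R. Proof. reflexivity. Qed.
Lemma Re_sub z w : Re (Csub z w) = (Re z - Re w)%R. Proof. unfold Csub; simpl; ring. Qed.
Lemma Im_sub z w : Im (Csub z w) = (Im z - Im w)%R. Proof. unfold Csub; simpl; ring. Qed.
Lemma Re_0 : Re Defs.C0 = 0%R. Proof. reflexivity. Qed.
Lemma Im_0 : Im Defs.C0 = 0%R. Proof. reflexivity. Qed.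

Lemma P1 z : Cmul Defs.C1 z = z.
Proof. destruct z; unfold Cmul, Defs.C1, Cr; simpl; f_equal; ring. Qed.
Lemma P2 a b : Cmul (Copp Defs.C1) (Csub a b) = Csub b a.
Proof. destruct a, b; unfold Cmul, Defs.C1, Cr, Csub, Cadd, Copp; simpl; f_equal; ring. Qed.
Lemma P3 a b c : Csub (Csub a b) (Csub a c) = Csub c b.
Proof. destruct a, b, c; unfold Csub, Cadd, Copp; simpl; f_equal; ring. Qed.
Lemma P4 a b c : Csub (Csub b a) (Csub c a) = Csub b c.
Proof. destruct a, b, c; unfold Csub, Cadd, Copp; simpl; f_equal; ring. Qed.

Lemma Cadd_comm a b : Cadd a b = Cadd b a.
Proof. destruct a, b; unfold Cadd; simpl; f_equal; ring. Qed.
Lemma Hswap k e d x1 x2 x3 x4 a1 a2 :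
  Hpoly k e d x1 x4 x3 x2 a2 a1 = Copp (Hpoly k e d x1 x2 x3 x4 a1 a2).
Proof.
  destruct k; unfold Hpoly; [| | rewrite (Cadd_comm a2 a1)];
  destruct e, d, x1, x2, x3, x4, a1, a2;
  unfold Csub, Cadd, Copp, Cmul, Defs.C1, Cr; simpl; f_equal; field.
Qed.
Lemma Coppopp z : Copp (Copp z) = z.
Proof. destruct z; unfold Copp; simpl; f_equal; ring. Qed.
Lemma Csinh_opp z : Csinh (Copp z) = Copp (Csinh z).
Proof. unfold Csinh; rewrite Coppopp. generalize (Cexp z) (Cexp (Copp z)); intros [] [];
  unfold Csub, Cadd, Copp, Cmul, Cr; simpl; f_equal; ring. Qed.
Lemma two_sub a b : Cmul (Cr 2) (Csub a b) = Copp (Cmul (Cr 2) (Csub b a)).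
Proof. destruct a, b; unfold Csub, Cadd, Copp, Cmul, Cr; simpl; f_equal; ring. Qed.
Lemma Qswap k e d x1 x2 x3 x4 a1 a2 :
  Qpoly k e d x1 x4 x3 x2 a2 a1 = Copp (Qpoly k e d x1 x2 x3 x4 a1 a2).
Proof.
  destruct k; unfold Qpoly.
  1,2: destruct e, d, x1, x2, x3, x4, a1, a2;
  unfold Csub, Cadd, Copp, Cmul, Defs.C1, Cr; simpl; f_equal; field.
  rewrite (two_sub a2 a1), Csinh_opp.
  generalize (Csinh (Cmul (Cr 2) a1)) (Csinh (Cmul (Cr 2) a2)) (Csinh (Cmul (Cr 2) (Csub a1 a2))).
  intros s1 s2 s3; destruct e, d, x1, x2, x3, x4, s1, s2, s3;
  unfold Csub, Cadd, Copp, Cmul, Defs.C1, Cr; simpl; f_equal; field.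
Qed.

Lemma Copp0 : Copp Defs.C0 = Defs.C0.
Proof. unfold Copp, Defs.C0, Cr; simpl; f_equal; ring. Qed.

Lemma two_ssub a b : Cmul (Cr 2) (Csub a (Csub a b)) = Cmul (Cr 2) b.
Proof. destruct a, b; unfold Csub, Cadd, Copp, Cmul, Cr; simpl; f_equal; ring. Qed.
Lemma QT k e d x1 x2 x3 x4 a1 a2 :
  Qpoly k e d x1 x2 x4 x3 a1 (Csub a1 a2) = Qpoly k e d x1 x2 x3 x4 a1 a2.
Proof.
  destruct k; unfold Qpoly.
  1,2: destruct e, d, x1, x2, x3, x4, a1, a2;
  unfold Csub, Cadd, Copp, Cmul, Defs.C1, Cr; simpl; f_equal; field.
  rewrite two_ssub.
  generalize (Csinh (Cmul (Cr 2) a1)) (Csinh (Cmul (Cr 2) a2)) (Csinh (Cmul (Cr 2) (Csub a1 a2))).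
  intros s1 s2 s3; destruct e, d, x1, x2, x3, x4, s1, s2, s3;
  unfold Csub, Cadd, Copp, Cmul, Defs.C1, Cr; simpl; f_equal; field.
Qed.

Lemma Re_opp z : Re (Copp z) = (- Re z)%R. Proof. reflexivity. Qed.
Lemma Im_opp z : Im (Copp z) = (- Im z)%R. Proof. reflexivity. Qed.

Lemma QSh k e d x1 x2 x3 x4 a1 a2 :
  Qpoly k e d x1 x2 x3 x4 a1 a2 = Defs.C0 -> Qpoly k e d x1 x4 x3 x2 a2 a1 = Defs.C0.
Proof. intro H; rewrite Qswap, H; apply Copp0. Qed.
Lemma QTh k e d x1 x2 x3 x4 a1 a2 :
  Qpoly k e d x1 x2 x3 x4 a1 a2 = Defs.C0 -> Qpoly k e d x1 x2 x4 x3 a1 (Csub a1 a2) = Defs.C0.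
Proof. intro H; rewrite QT; exact H. Qed.

Ltac solveC := apply Ceq;
  repeat rewrite ?Re_add, ?Re_sub, ?Re_0, ?Re_opp, ?Im_add, ?Im_sub, ?Im_0, ?Im_opp; lra.

Ltac canon p := first [ is_var p | lazymatch p with Csub ?u ?v => is_var u; is_var v | Copp ?u => is_var u end ].

Ltac normp a1 a2 a3 :=
  let go H p :=
    first [ canon p; fail 1
          | replace p with a1 in H by solveC | replace p with a2 in H by solveC
          | replace p with a3 in H by solveC
          | replace p with (Csub a1 a2) in H by solveC | replace p with (Csub a2 a1) in H by solveC
          | replace p with (Csub a1 a3) in H by solveC | replace p with (Csub a3 a1) in H by solveC
          | replace p with (Csub a2 a3) in H by solveC | replace p with (Csub a3 a2) in H by solveC
          | replace p with (Copp a1) in H by solveC | replace p with (Copp a2) in H by solveC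
          | replace p with (Copp a3) in H by solveC ] in
  repeat match goal with
  | H : context [?F ?x ?y ?p] |- _ =>
      lazymatch type of F with CC -> CC -> CC -> CC => idtac end; go H p
  end.

Ltac addsym Lam :=
  repeat match goal with
  | |- context [Lam ?x ?y ?c] =>
      lazymatch goal with
      | _ : Lam x y c = Lam y x c |- _ => fail
      | _ : Lam y x c = Lam x y c |- _ => fail
      | _ => idtac
      end;
      let S := fresh "S" in assert (S : Lam x y c = Lam y x c) by auto
  | H : context [Lam ?x ?y ?c] |- _ =>
      lazymatch goal with
      | _ : Lam x y c = Lam y x c |- _ => fail
      | _ : Lam y x c = Lam x y c |- _ => fail
      | _ => idtac
      end;
      let S := fresh "S" in assert (S : Lam x y c = Lam y x c) by auto
  end.

Ltac projall :=
  repeat match goal with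
  | H : @eq CC _ _ |- _ =>
      let H1 := fresh "R" in let H2 := fresh "I" in
      pose proof (f_equal Re H) as H1; pose proof (f_equal Im H) as H2;
      clear H;
      repeat (rewrite ?Re_add, ?Re_sub, ?Re_0 in H1);
      repeat (rewrite ?Im_add, ?Im_sub, ?Im_0 in H2)
  end.

Theorem theorem5p2 (k : kind) (eps delta : CC)
  (a : vertex) (b : bool) (Ha : a <> v000)
  (L Lam Lamb : CC -> CC -> CC -> CC)
  (HL : Lagrangian_relations k eps delta L Lam Lamb)
  (al1 al2 al3 : CC) (X : vertex -> CC)
  (Hsix : six_tuple k eps delta (colour a b) X al1 al2 al3)
  (Htet : tetrahedron_eqs k eps delta (colour a b) X al1 al2 al3) :
  closure_sum L Lam Lamb (colour a b) X al1 al2 al3 = 0.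
Proof.
  destruct HL as [Hs1 [Hs2 [Hrh [Htr [HQb HQw]]]]].
  destruct Hsix as [F1 [F2 [F3 [F4 [F5 F6]]]]].
  destruct Htet as [T1 T2].
  destruct a as [[a1 a2] a3].
  destruct a1, a2, a3, b; try (exfalso; apply Ha; reflexivity); clear Ha;
  cbv [sq_eq quadPoly colour unif v000 v100 v010 v001 v110 v101 v011 v111 xorb andb Bool.eqb
       closure_sum calL two_form] in *;
  rewrite ?P1, ?P2 in T1, T2;
  repeat match goal with
  | H : Hpoly ?k ?e ?d ?x1 ?x2 ?x3 ?x4 ?b1 ?b2 = _ |- _ =>
      let H' := fresh "Hsw" in
      assert (H' : Hpoly k e d x1 x4 x3 x2 b2 b1 = Defs.C0) by (rewrite Hswap, H; apply Copp0);
      (try pose proof (Hrh _ _ _ _ _ _ H)); (try pose proof (Htr _ _ _ _ _ _ H));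
      (try pose proof (Hrh _ _ _ _ _ _ H')); (try pose proof (Htr _ _ _ _ _ _ H'));
      clear H H'
  | H : Qpoly ?k ?e ?d ?x1 ?x2 ?x3 ?x4 ?b1 ?b2 = _ |- _ =>
      let H' := fresh "Hsw" in
      assert (H' : Qpoly k e d x1 x4 x3 x2 b2 b1 = Defs.C0) by (rewrite Qswap, H; apply Copp0);
      clear H';
      let H1 := fresh "Q" in pose proof (QSh _ _ _ _ _ _ _ _ _ H) as H1;
      let H2 := fresh "Q" in pose proof (QTh _ _ _ _ _ _ _ _ _ H) as H2;
      let H3 := fresh "Q" in pose proof (QTh _ _ _ _ _ _ _ _ _ H1) as H3;
      let H4 := fresh "Q" in pose proof (QSh _ _ _ _ _ _ _ _ _ H2) as H4;
      let H5 := fresh "Q" in pose proof (QSh _ _ _ _ _ _ _ _ _ H3) as H5;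
      let H6 := fresh "Q" in pose proof (QTh _ _ _ _ _ _ _ _ _ H4) as H6;
      let H7 := fresh "Q" in pose proof (QTh _ _ _ _ _ _ _ _ _ H5) as H7;
      let H8 := fresh "Q" in pose proof (QSh _ _ _ _ _ _ _ _ _ H6) as H8;
      let H9 := fresh "Q" in pose proof (QSh _ _ _ _ _ _ _ _ _ H7) as H9;
      let H10 := fresh "Q" in pose proof (QTh _ _ _ _ _ _ _ _ _ H8) as H10;
      let useQ h := (try pose proof (HQb _ _ _ _ _ _ h)); (try pose proof (HQw _ _ _ _ _ _ h)); clear h in
      useQ H; useQ H1; useQ H2; useQ H3; useQ H4; useQ H5; useQ H6; useQ H7; useQ H8; useQ H9; useQ H10
  end;
  rewrite ?P3, ?P4 in *;
  normp al1 al2 al3;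
  addsym Lam; addsym Lamb;
  clear Hs1 Hs2 Hrh Htr HQb HQw;
  projall;
  apply Ceq; repeat rewrite ?Re_add, ?Re_sub, ?Re_0, ?Im_add, ?Im_sub, ?Im_0; lra.
Qed.
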